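(* For all integers $u\ge 4$, $$3\,C_{24}^{(3\cdot 2^u)}\equiv C_0+2^{u-2}C_1 \pmod{2^u},$$ where $C_0=\mathrm{Circ}(2,0,0,0,0,0,0,0,-1,0,0,0,0,0,0,0,-1,0,0,0,0,0,0,0)$ and $C_1=\mathrm{Circ}(2,0,2,0,1,0,2,0,1,0,0,0,2,0,0,0,1,0,2,0,1,0,2,0)$.
   Context: For integers $k,i\ge0$, $C_k^{(i)}$ is the $k\times k$ integer matrix $\big(\sum_{\alpha\in\mathbb{Z}}\binom{i}{\alpha k+r-s}\big)_{1\le r,s\le k}$, with $\binom{a}{b}=0$ if $b<0$ or $b>a$. For a $k$-tuple $(u_0,\dots,u_{k-1})$, $\mathrm{Circ}(u_0,\dots,u_{k-1})$ is the $k\times k$ matrix whose $(r,s)$ entry is $u_{(s-r \bmod k)}$. Congruence of matrices is entrywise. *)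

(* Defs.v *)
From mathcomp Require Import all_boot all_order all_algebra.
Set Implicit Arguments. Unset Strict Implicit. Unset Printing Implicit Defensive.
Import Order.TTheory GRing.Theory Num.Theory.
Local Open Scope ring_scope.

Definition binz (a : nat) (b : int) : int :=
  match b with Posz n => ('C(a, n))%:Z | Negz _ => 0 end.

(* C_k^{(i)} : entry (r,s) = sum_{alpha in Z} binom(i, alpha*k + r - s).
   Indices r,s are 0-based ('I_k) here; only r - s matters.
   The sum over alpha in Z is taken over alpha in [-(i+1), i+1]; all other
   terms vanish (for k >= 1, |r - s| < k). *)
Definition Cmat (k i : nat) : 'M[int]_k :=
  \matrix_(r < k, s < k)
    \sum_(a < (2 * i + 3)%N)
      binz i (((a%:Z - (i.+1)%:Z) * k%:Z) + r%:Z - s%:Z).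

Definition Circ (k : nat) (u : seq int) : 'M[int]_k :=
  \matrix_(r < k, s < k) nth 0 u ((s + k - r) %% k)%N.

Definition C0 : 'M[int]_24 :=
  Circ 24 [:: 2; 0; 0; 0; 0; 0; 0; 0; -1; 0; 0; 0; 0; 0; 0; 0; -1; 0; 0; 0; 0; 0; 0; 0].
Definition C1 : 'M[int]_24 :=
  Circ 24 [:: 2; 0; 2; 0; 1; 0; 2; 0; 1; 0; 0; 0; 2; 0; 0; 0; 1; 0; 2; 0; 1; 0; 2; 0].

(* Main.v *)
Require Import Defs.
From mathcomp Require Import all_boot all_order all_algebra.
From mathcomp Require Import zify ring.
Import GRing.Theory Num.Theory.
Local Open Scope ring_scope.

Definition convl (a b : seq int) (k : nat) : int :=
  foldr (fun i acc => nth 0 a i * nth 0 b ((k + 24 - i) %% 24)%N + acc) 0 (iota 0 24).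
Definition conv a b := mkseq (convl a b) 24.

Lemma sum_foldr (F : nat -> int) n :
  \sum_(i < n) F i = foldr (fun i acc => F i + acc) 0 (iota 0 n).
Proof.
rewrite -(big_mkord xpredT) /index_iota subn0.
by elim: (iota 0 n) => [|x l IH]; rewrite ?big_nil ?big_cons ?IH.
Qed.

Lemma CircE a (r s : 'I_24) : Circ 24 a r s = nth 0 a ((s + 24 - r) %% 24)%N.
Proof. by rewrite mxE. Qed.

Lemma Circ_mul a b : Circ 24 a *m Circ 24 b = Circ 24 (conv a b).
Proof.
apply/matrixP => r s; rewrite !mxE /conv nth_mkseq ?ltn_pmod // /convl.
rewrite -(sum_foldr (fun i => nth 0 a i * nth 0 b (((s + 24 - r) %% 24 + 24 - i) %% 24)%N)).
rewrite (reindex (fun i : 'I_24 => (inord ((i + r) %% 24) : 'I_24))) /=.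
  apply: eq_bigr => i _; rewrite !mxE inordK; last by rewrite ltn_pmod.
  have i24 := ltn_ord i; have r24 := ltn_ord r; have s24 := ltn_ord s.
  congr (nth _ _ _ * nth _ _ _); lia.
exists (fun t : 'I_24 => inord ((t + 24 - r) %% 24) : 'I_24) => x _;
  apply/val_inj; rewrite /= !inordK ?ltn_pmod //;
  have x24 := ltn_ord x; have r24 := ltn_ord r; lia.
Qed.

Lemma allP24 (P : nat -> bool) : all P (iota 0 24) -> forall k, (k < 24)%N -> P k.
Proof. by move/allP => H k Hk; apply: H; rewrite mem_iota. Qed.

Lemma Circ_lin a b c (x y : int) :
  all (fun k => nth 0 a k == x * nth 0 b k + y * nth 0 c k) (iota 0 24) ->
  Circ 24 a = x *: Circ 24 b + y *: Circ 24 c.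
Proof.
move=> H; apply/matrixP => r s; rewrite !mxE.
apply/eqP; have := @allP24 _ H _ (ltn_pmod (s + 24 - r) (isT : (0 < 24)%N)); exact.
Qed.

Definition cong (m : int) (X Y : 'M[int]_24) := exists E, X = Y + m *: E.

Lemma cong_dvd m (X Y : 'M[int]_24) : (forall r s, (m %| X r s - Y r s)%Z) -> cong m X Y.
Proof.
move=> H; exists (\matrix_(r, s) ((X r s - Y r s) %/ m)%Z).
apply/matrixP => r s; rewrite !mxE mulrC divzK //.
by rewrite addrC subrK.
Qed.

Definition red (m : int) (l : seq int) := map (fun x => (x %% m)%Z) l.
Definition quo (m : int) (l : seq int) := map (fun x => (x %/ m)%Z) l.

Lemma Circ_red m l : size l = 24%N ->
  Circ 24 l = Circ 24 (red m l) + m *: Circ 24 (quo m l).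
Proof.
move=> Hs; apply/matrixP => r s; rewrite !mxE.
have Hk : ((s + 24 - r) %% 24 < size l)%N by rewrite Hs ltn_pmod.
rewrite (nth_map 0) // (nth_map 0) //.
by rewrite {1}(divz_eq (nth 0 l _) m) addrC mulrC.
Qed.

Lemma sq_red m a (Y E : 'M[int]_24) : Y = Circ 24 a + m *: E ->
  exists E', Y ^+ 2 = Circ 24 (red m (conv a a)) + m *: E'.
Proof.
move=> ->.
exists (Circ 24 (quo m (conv a a)) + (Circ 24 a * E + E * Circ 24 a + m *: (E * E))).
rewrite expr2 mulrDl !mulrDr -!scalerAl -!scalerAr scalerA.
rewrite -mulmxE Circ_mul mulmxE (@Circ_red m _ (size_mkseq _ _)).
rewrite !scalerDr -scalerA !addrA; congr (_ + _).
Qed.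

Definition l0 : seq int := 1 :: nseq 22 0 ++ [:: 1].
Definition e23 : seq int := nseq 23 0 ++ [:: 1].
Definition P := Circ 24 e23.

Lemma nth_e23 k : nth 0 e23 k = (k == 23)%:R.
Proof.
case: (ltnP k 24) => Hk.
  have H : all (fun k => nth 0 e23 k == (k == 23)%:R) (iota 0 24) by vm_compute.
  by apply/eqP; have := @allP24 _ H _ Hk.
rewrite nth_default; last by rewrite size_cat size_nseq.
by case: eqP => // E; rewrite E in Hk.
Qed.

Lemma Ppow j (r s : 'I_24) : (P ^+ j) r s = ((r : nat) == (s + j) %% 24)%N%:R.
Proof.
have s24 := ltn_ord s.
elim: j r => [|j IH] r; have r24 := ltn_ord r.
  rewrite expr0 mxE addn0 modn_small //.
rewrite exprS -mulmxE mxE.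
rewrite (bigD1 (inord ((s+j) %% 24))) //= big1 ?addr0.
  rewrite IH inordK ?ltn_pmod // eqxx mulr1 /P mxE nth_e23 inordK ?ltn_pmod //.
  by congr (_%:R); case: eqP => H1; case: eqP => H2 //; exfalso; lia.
move=> t Ht; rewrite IH.
case: eqP => [H|_]; last by rewrite mulr0.
exfalso; move/eqP: Ht; apply; apply/val_inj; rewrite /= inordK ?ltn_pmod //.
Qed.

Lemma l0P : Circ 24 l0 = P + 1.
Proof.
apply/matrixP => r s; rewrite !mxE.
have H : all (fun k => nth 0 l0 k == nth 0 e23 k + (k == 0)%N%:R) (iota 0 24) by vm_compute.
have r24 := ltn_ord r; have s24 := ltn_ord s.
have -> : (r == s) = ((s + 24 - r) %% 24 == 0)%N.
  case: eqP => H1; case: eqP => H2 //; exfalso.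
    by apply: H2; rewrite H1; lia.
  by apply: H1; apply: ord_inj; lia.
apply/eqP; have := @allP24 _ H _ (ltn_pmod (s + 24 - r) (isT : (0 < 24)%N)); exact: id.
Qed.

Lemma binz_sum n (t : int) :
  binz n t = \sum_(j < n.+1) (t == (j : nat)%:Z)%:R *+ 'C(n, j).
Proof.
case: t => [m|m] /=; last by rewrite big1 // => j _; rewrite mul0rn.
case: (ltnP m n.+1) => Hm.
  rewrite (bigD1 (Ordinal Hm)) //= eqxx big1 ?addr0.
    by rewrite -natz.
  move=> j Hj; case: eqP => [[E]|_]; last by rewrite mul0rn. exfalso; move/eqP: Hj; apply; apply/val_inj => /=.
  by rewrite E.
rewrite bin_small // big1 // => j _; case: eqP => [[E]|_]; last by rewrite mul0rn.
have := ltn_ord j; lia.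
Qed.

Lemma count_a n (r s : 'I_24) (j : nat) : (j <= n)%N ->
  \sum_(a < (2 * n + 3)%N)
     ((((a : nat)%:Z - (n.+1)%:Z) * 24%:Z + (r : nat)%:Z - (s : nat)%:Z) == j%:Z)%:R
  = ((r : nat) == (s + j) %% 24)%N%:R :> int.
Proof.
move=> Hj; have r24 := ltn_ord r; have s24 := ltn_ord s.
case: eqP => Hr.
  have Ha : ((s + j) %/ 24 + n + 1 < 2 * n + 3)%N by lia.
  rewrite (bigD1 (Ordinal Ha)) //= big1 ?addr0.
    by have -> : ((((s + j) %/ 24 + n + 1)%:Z - (n.+1)%:Z) * 24%:Z + (r : nat)%:Z - (s : nat)%:Z == j%:Z) by apply/eqP; lia.
  move=> a Ha'; case: eqP => [E|_] //; exfalso; move/eqP: Ha'; apply; apply: ord_inj => /=.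
  have := ltn_ord a; lia.
rewrite big1 // => a _; case: eqP => [E|_] //; exfalso; apply: Hr; have := ltn_ord a; lia.
Qed.

Lemma Cmat_pow n : Cmat 24 n = Circ 24 l0 ^+ n.
Proof.
rewrite l0P exprD1n; apply/matrixP => r s; rewrite summxE mxE.
under [RHS]eq_bigr do rewrite mulmxnE Ppow.
under [LHS]eq_bigr do rewrite binz_sum.
rewrite exchange_big /=; apply: eq_bigr => j _.
rewrite sumrMnl; congr (_ *+ _).
by apply: count_a; have := ltn_ord j; lia.
Qed.

Definition LD : seq int := [:: -1; 0; -1; 0; -1; 0; -1; 0; -1; 0; -1; 0; -1; 0; -1; 0; -1; 0; -1; 0; -1; 0; -1; 0].
Definition LD2 : seq int := [:: 14; 0; 10; 0; 11; 0; 12; 0; 9; 0; 10; 0; 10; 0; 10; 0; 9; 0; 12; 0; 11; 0; 10; 0].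

Lemma addE (A B : 'M[int]_24) r s : (A + B) r s = A r s + B r s.
Proof. by rewrite mxE. Qed.
Lemma scaleE (c : int) (A : 'M[int]_24) r s : (c *: A) r s = c * A r s.
Proof. by rewrite mxE. Qed.

Lemma subE (A B : 'M[int]_24) r s : (A - B) r s = A r s - B r s.
Proof. by rewrite !mxE. Qed.

Lemma zeroE r s : (0 : 'M[int]_24) r s = 0.
Proof. by rewrite mxE. Qed.

Lemma F1 : C0 * C0 = 3 *: C0 + 0 *: C0.
Proof. by rewrite -mulmxE /C0 Circ_mul; apply: Circ_lin; vm_compute. Qed.
Lemma F2 : C0 * C1 = 3 *: C1 + 4 *: Circ 24 LD.
Proof. by rewrite -mulmxE /C0 /C1 Circ_mul; apply: Circ_lin; vm_compute. Qed.
Lemma F3 : C1 * C0 = C0 * C1.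
Proof. by rewrite -!mulmxE /C0 /C1 !Circ_mul; congr (Circ 24 _); vm_compute. Qed.
Lemma F4 : C1 * C1 = 2 *: Circ 24 LD2 + 0 *: C1.
Proof. by rewrite -mulmxE /C1 Circ_mul; apply: Circ_lin; vm_compute. Qed.
Lemma F5 : GRing.comm C0 (Circ 24 l0).
Proof. by rewrite /GRing.comm -!mulmxE /C0 !Circ_mul; congr (Circ 24 _); vm_compute. Qed.
Lemma F6 : GRing.comm C1 (Circ 24 l0).
Proof. by rewrite /GRing.comm -!mulmxE /C1 !Circ_mul; congr (Circ 24 _); vm_compute. Qed.

Definition X n := Circ 24 l0 ^+ n.

Definition Inv v := exists E : 'M[int]_24,
  3 *: X (3 * 2 ^ (v + 4)) = C0 + (2 : int) ^+ (v + 2) *: C1 + (2 : int) ^+ (v + 4) *: E.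

Lemma comm_E (Z E : 'M[int]_24) (a b : int) n : a != 0 ->
  GRing.comm Z (Circ 24 l0) -> GRing.comm Z C0 -> GRing.comm Z C1 ->
  3 *: X n = C0 + b *: C1 + a *: E -> GRing.comm Z E.
Proof.
move=> a0 cl c0 c1 HE.
have H : a *: E = 3 *: X n - C0 - b *: C1.
  by rewrite HE; apply/matrixP => r s; rewrite !mxE; ring.
have cX : GRing.comm Z (X n) by apply: commrX.
have : a *: (Z * E - E * Z) == 0.
  rewrite scalerBr scalerAr scalerAl H mulrBr mulrBl !mulrBr !mulrBl.
  by rewrite -!scalerAr -!scalerAl cX c0 c1 subrr.
move/eqP => h; apply/matrixP => r s; have := congr1 (fun M : 'M[int]_24 => M r s) h.
rewrite scaleE subE zeroE => /eqP; rewrite mulf_eq0 (negbTE a0) /= subr_eq0.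
by move/eqP.
Qed.

Lemma cop32 (t : int) v : t = 2 ^+ v -> coprimez (32 * t) 3.
Proof.
move=> ->; rewrite /coprimez.
have -> : (32 * 2 ^+ v = (2 : int) ^+ (v + 5))%R by rewrite exprD mulrC.
by rewrite /gcdz abszX; apply: coprimeXl.
Qed.

Lemma step v : Inv v -> Inv v.+1.
Proof.
move=> [E HE].
set t : int := 2 ^+ v.
have t0 : t != 0 by rewrite expf_neq0.
have ha : (2:int) ^+ (v + 2) = 4 * t by rewrite /t exprD; ring.
have hb : (2:int) ^+ (v + 4) = 16 * t by rewrite /t exprD; ring.
have hc : (2:int) ^+ (v.+1 + 2) = 8 * t by rewrite /t addSn exprS exprD; ring.
have hd : (2:int) ^+ (v.+1 + 4) = 32 * t by rewrite /t addSn exprS exprD; ring.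
rewrite ha hb in HE.
have n0 : (16 * t : int) != 0 by rewrite mulf_neq0.
have c0E : GRing.comm C0 E := @comm_E C0 E (16 * t) (4 * t) _ n0 F5 (commr_refl C0) (esym F3) HE.
have c1E : GRing.comm C1 E := @comm_E C1 E (16 * t) (4 * t) _ n0 F6 F3 (commr_refl C1) HE.
have HX : X (3 * 2 ^ (v.+1 + 4)) = X (3 * 2 ^ (v + 4)) ^+ 2.
  by rewrite /X -exprM addSn expnS mulnCA mulnC.
set Y := X (3 * 2 ^ (v + 4)) in HE HX.
have H9 : 9 *: (Y ^+ 2) = (3 *: Y) * (3 *: Y) by rewrite -expr2 exprZn.
rewrite HE !mulrDl !mulrDr -!scalerAl -!scalerAr !scalerA in H9.
rewrite F3 -c0E -c1E F1 F2 F4 in H9.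
suff : cong (2 ^+ (v.+1 + 4)) (3 *: X (3 * 2 ^ (v.+1 + 4))) (C0 + 2 ^+ (v.+1 + 2) *: C1) by [].
apply: cong_dvd => r s.
have := congr1 (fun M : 'M[int]_24 => M r s) H9; cbv beta.
rewrite !addE !scaleE hc hd HX !addE !scaleE.
set y := (Y ^+ 2) r s; set c0 := C0 r s; set c1 := C1 r s; set d := Circ 24 LD r s.
set d2 := Circ 24 LD2 r s; set e0 := (C0 * E) r s; set e1 := (C1 * E) r s; set ee := (E * E) r s.
move=> Hy.
rewrite -(Gauss_dvdzl _ (@cop32 t v erefl)).
apply/dvdzP; exists (d + e0 + t * d2 + 4 * t * e1 + 8 * t * ee).
have -> : (3 * y - (c0 + 8 * t * c1)) * 3 = 9 * y - 3 * c0 - 24 * t * c1 by ring.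
rewrite Hy; ring.
Qed.

Definition LA : seq int := [:: 2; 0; 0; 0; 0; 0; 0; 0; -1; 0; 0; 0; 0; 0; 0; 0; -1; 0; 0; 0; 0; 0; 0; 0].
Definition LB : seq int := [:: 2; 0; 2; 0; 1; 0; 2; 0; 1; 0; 0; 0; 2; 0; 0; 0; 1; 0; 2; 0; 1; 0; 2; 0].
Lemma C0E : C0 = Circ 24 LA. Proof. by []. Qed.
Lemma C1E : C1 = Circ 24 LB. Proof. by []. Qed.

Lemma base_fin (a : seq int) (E4 : 'M[int]_24) :
  all (fun k => (16 %| 3 * nth 0 a k - nth 0 LA k - 4 * nth 0 LB k)%Z) (iota 0 24) ->
  exists E, 3 *: (Circ 24 a + 16 *: E4) = C0 + (2:int) ^+ (0 + 2) *: C1 + (2:int) ^+ (0 + 4) *: E.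
Proof.
move=> H.
have -> : (2:int) ^+ (0 + 2) = 4 by [].
have -> : (2:int) ^+ (0 + 4) = 16 by [].
suff : cong 16 (3 *: (Circ 24 a + 16 *: E4)) (C0 + 4 *: C1) by [].
apply: cong_dvd => r s.
rewrite !(addE, scaleE) C0E C1E !CircE.
have := @allP24 _ H _ (ltn_pmod (s + 24 - r) (isT : (0 < 24)%N)).
move/dvdzP => [q Hq]; apply/dvdzP; exists (q + 3 * E4 r s).
set k := ((s + 24 - r) %% 24)%N in Hq *.
have -> : 3 * (nth 0 a k + 16 * E4 r s) - (nth 0 LA k + 4 * nth 0 LB k)
  = (3 * nth 0 a k - nth 0 LA k - 4 * nth 0 LB k) + 48 * E4 r s by ring.
by rewrite Hq; ring.
Qed.

Lemma base : Inv 0.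
Proof.
rewrite /Inv /X.
have -> : (3 * 2 ^ (0 + 4) = 3 * 2 * 2 * 2 * 2)%N by [].
rewrite !exprM.
have H3 : Circ 24 l0 ^+ 3 = Circ 24 (conv l0 (conv l0 l0)) + (16 : int) *: 0.
  by rewrite scaler0 addr0 !exprS expr0 mulr1 -!mulmxE !Circ_mul.
have [E1 H1] := @sq_red _ _ _ _ H3.
have [E2 H2] := @sq_red _ _ _ _ H1.
have [E3 H3'] := @sq_red _ _ _ _ H2.
have [E4 H4] := @sq_red _ _ _ _ H3'.
rewrite H4; apply: base_fin.
by vm_compute.
Qed.

Lemma all_inv v : Inv v.
Proof. elim: v => [|v IH]; [exact: base | exact: step]. Qed.

Theorem theorem8 (u : nat) (hu : (4 <= u)%N) :
  forall r s : 'I_24,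
    (((3 : int) *: Cmat 24 (3 * 2 ^ u)) r s
       = (C0 + ((2 : int) ^+ (u - 2)) *: C1) r s %[mod (2 : int) ^+ u])%Z.
Proof.
move=> r s.
have [v ->] : exists v, u = (v + 4)%N by exists (u - 4)%N; rewrite subnK.
have -> : (v + 4 - 2 = v + 2)%N by lia.
have [E HE] := all_inv v.
have -> : Cmat 24 (3 * 2 ^ (v + 4)) = X (3 * 2 ^ (v + 4)) := Cmat_pow _.
rewrite HE.
apply/eqP; rewrite eqz_mod_dvd; apply/dvdzP; exists (E r s).
rewrite !(addE, scaleE); ring.
Qed.
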